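(* Let $\mathcal E$ be a nest on a complex Banach space $X$ and let $\mathcal J$ be a $\mathcal T(\mathcal E)$-bimodule. Then for every $E\in\mathcal E$ the subspace $[\mathcal J E]$ belongs to $\mathcal E$, and the map $\Phi_{\mathcal J}:\mathcal E\to\mathcal E$, $E\mapsto[\mathcal JE]$, is an admissible support function on $\mathcal E$.
   Context: A nest $\mathcal E$ on $X$ is a family of closed linear subspaces of $X$, totally ordered by inclusion, containing $\{0\}$ and $X$, closed under arbitrary meets $\wedge$ (intersections) and joins $\vee$ (norm-closed linear spans of unions). For $E\in\mathcal E$, $E_-=\vee\{F\in\mathcal E: F\subsetneq E\}$. $\mathcal T(\mathcal E)=\{T\in\mathcal B(X): TE\subseteq E\ \forall E\in\mathcal E\}$ is the nest algebra. A $\mathcal T(\mathcal E)$-bimodule is a linear subspace $\mathcal J\subseteq\mathcal B(X)$ with $\mathcal T(\mathcal E)\mathcal J\subseteq\mathcal J$ and $\mathcal J\mathcal T(\mathcal E)\subseteq\mathcal J$. $[\mathcal JE]$ is the norm-closed linear span of $\{Tx: T\in\mathcal J, x\in E\}$. A support function on $\mathcal E$ is an inclusion-preserving map $\Phi:\mathcal E\to\mathcal E$; it is admissible if for every $N\in\mathcal E\setminus\{\{0\}\}$, $\vee_{E\in\mathcal E, E\subsetneq N}\Phi(E)=\Phi(N_-)$. *)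

(* Defs.v *)
From mathcomp Require Import all_boot all_algebra.
From mathcomp Require Import all_classical all_reals all_analysis.
From mathcomp Require Export complex.
Import numFieldNormedType.Exports.

Set Implicit Arguments.
Unset Strict Implicit.
Unset Printing Implicit Defensive.

Local Open Scope classical_set_scope.
Local Open Scope ring_scope.

Section NestDefs.
Variables (K : numFieldType) (V : normedModType K).

Definition lin_subspace (S : set V) : Prop :=
  S 0 /\ (forall x y, S x -> S y -> S (x + y)) /\
  (forall (a : K) x, S x -> S (a *: x)).

Definition closed_subspace (S : set V) : Prop := lin_subspace S /\ closed S.

Definition clspan (A : set V) : set V :=
  [set x | forall S, closed_subspace S -> A `<=` S -> S x].

Definition smeet (F : set (set V)) : set V := [set x | forall E, F E -> E x].
Definition sjoin (F : set (set V)) : set V := clspan (\bigcup_(E in F) E).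

Definition psub (A B : set V) : Prop := A `<=` B /\ A <> B.

Definition bounded_op (T : V -> V) : Prop :=
  (forall (a : K) x y, T (a *: x + y) = a *: T x + T y) /\
  (exists M : K, forall x, `|T x| <= M * `|x|).

Definition nest (N : set (set V)) : Prop :=
  (forall E, N E -> closed_subspace E) /\
  (forall E F, N E -> N F -> E `<=` F \/ F `<=` E) /\
  N [set 0] /\ N setT /\
  (forall F, F `<=` N -> N (smeet F)) /\
  (forall F, F `<=` N -> N (sjoin F)).

Definition nest_minus (N : set (set V)) (E : set V) : set V :=
  sjoin [set F | N F /\ psub F E].

Definition nest_alg (N : set (set V)) : set (V -> V) :=
  [set T | bounded_op T /\ forall E, N E -> T @` E `<=` E].

Definition bimodule (N : set (set V)) (J : set (V -> V)) : Prop :=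
  (forall T, J T -> bounded_op T) /\
  J (fun _ => 0) /\
  (forall S T, J S -> J T -> J (fun x => S x + T x)) /\
  (forall (a : K) T, J T -> J (fun x => a *: T x)) /\
  (forall A T, nest_alg N A -> J T -> J (A \o T) /\ J (T \o A)).

Definition JE (J : set (V -> V)) (E : set V) : set V :=
  clspan [set y | exists T x, J T /\ E x /\ y = T x].

Definition support_function (N : set (set V)) (Phi : set V -> set V) : Prop :=
  (forall E, N E -> N (Phi E)) /\
  (forall E F, N E -> N F -> E `<=` F -> Phi E `<=` Phi F).

Definition admissible (N : set (set V)) (Phi : set V -> set V) : Prop :=
  support_function N Phi /\
  forall M, N M -> M <> [set 0] ->
    sjoin [set Phi E | E in [set E | N E /\ psub E M]] = Phi (nest_minus N M).

End NestDefs.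

(* Main.v *)
Require Import Defs.
From mathcomp Require Import all_boot all_algebra.
From mathcomp Require Import all_classical all_reals all_analysis.
From mathcomp Require Import complex.
From mathcomp Require Import ring lra.
Import numFieldNormedType.Exports.
Import order.Order.TTheory GRing.Theory Num.Theory.
Set Implicit Arguments.
Unset Strict Implicit.
Unset Printing Implicit Defensive.
Local Open Scope classical_set_scope.
Local Open Scope ring_scope.
Local Open Scope complex_scope.

Definition nr (R : realType) (X : normedModType R[i]) (x : X) : R := complex.Re `|x|.

Lemma normE (R : realType) (X : normedModType R[i]) (x : X) : `|x| = (nr x)%:C.
Proof.
rewrite /nr; have := normr_ge0 x; case: `|x| => a b; rewrite lecE /= => /andP[/eqP -> _].
by [].
Qed.

Lemma nr_ge0 (R : realType) (X : normedModType R[i]) (x : X) : 0 <= nr x.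
Proof. by rewrite -ler0c -normE. Qed.

Lemma nrD (R : realType) (X : normedModType R[i]) (x y : X) : nr (x + y) <= nr x + nr y.
Proof. by rewrite -lecR rmorphD /= -!normE ler_normD. Qed.

Lemma nrZ (R : realType) (X : normedModType R[i]) (a : R[i]) (x : X) :
  nr (a *: x) = complex.Re `|a| * nr x.
Proof. rewrite {1}/nr normrZ normE; case: `|a| => u v; simpc; by rewrite /= mulrC. Qed.

Lemma ReR (R : realType) (t : R) : complex.Re `|t%:C| = `|t|.
Proof.
rewrite normc_def /= expr0n /= addr0 sqrtr_sqr //.
Qed.
Definition vgraph (R : realType) (X : normedModType R[i]) (p : X -> R) (A : set (X * R)) :=
  [/\ (forall a b, A a -> A b -> A (a.1 + b.1, a.2 + b.2)),
      (forall (t : R) a, A a -> A ((t%:C : R[i]) *: a.1, t * a.2)),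
      (forall x r s, A (x, r) -> A (x, s) -> r = s) &
      (forall a, A a -> a.2 <= p a.1)].

Lemma scale_inv (R : realType) (X : normedModType R[i]) (t : R) (d : X) :
  t != 0 -> (t%:C : R[i]) *: ((t^-1)%:C *: d) = d.
Proof.
move=> t0; by rewrite scalerA -rmorphM /= mulfV // scale1r.
Qed.

Lemma vgraph_ext (R : realType) (X : normedModType R[i]) (p : X -> R)
  (A : set (X * R)) (x0 : X) :
  (forall x y, p (x + y) <= p x + p y) ->
  (forall (t : R) x, 0 <= t -> p ((t%:C : R[i]) *: x) = t * p x) ->
  vgraph p A -> A (0, 0) -> ~ (exists r, A (x0, r)) ->
  exists B, vgraph p B /\ A `<=` B /\ ~ (B `<=` A).
Proof.
move=> pD pZ [Aadd Asc Afun Ab] A0 nx0.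
have Aopp : forall d r, A (d, r) -> A (- d, - r).
  move=> d r /(Asc (-1)) /=; rewrite rmorphN rmorph1 scaleN1r mulN1r //.
pose E := [set z | exists d r, A (d, r) /\ z = r - p (d - x0)].
have KI : forall d r e q, A (d, r) -> A (e, q) -> q - p (e - x0) <= p (d + x0) - r.
  move=> d r e q Adr Aeq.
  have := Ab _ (Aadd _ _ Aeq Adr) => /= H.
  have H2 := pD (e - x0) (d + x0).
  have eq : e - x0 + (d + x0) = e + d by rewrite addrCA subrK addrC.
  rewrite eq in H2.
  rewrite lerBrDr addrAC lerBlDr; apply: (le_trans H).
  by rewrite [X in _ <= X]addrC.
have Ene : E !=set0 by exists (0 - p (0 - x0)); exists 0, 0.
have Eub : has_ubound E.
  exists (p (0 + x0) - 0) => z [d [r [Adr ->]]]; exact: KI A0 Adr.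
pose c := sup E.
have c_le : forall d r, A (d, r) -> c <= p (d + x0) - r.
  move=> d r Adr; apply: ge_sup => // z [e [q [Aeq ->]]]; exact: KI Adr Aeq.
have c_ge : forall d r, A (d, r) -> r - p (d - x0) <= c.
  move=> d r Adr; apply: (ub_le_sup Eub); by exists d, r.
pose B := [set a : X * R | exists d r (t : R), A (d, r) /\ a = (d + (t%:C : R[i]) *: x0, r + t * c)].
exists B; split; last split.
- split.
  + move=> _ _ [d1 [r1 [t1 [A1 ->]]]] [d2 [r2 [t2 [A2 ->]]]] /=.
    exists (d1 + d2), (r1 + r2), (t1 + t2); split; first exact: (Aadd _ _ A1 A2).
    congr pair.
      by rewrite rmorphD /= scalerDl addrACA.
    by rewrite mulrDl addrACA.
  + move=> s _ [d [r [t [Adr ->]]]] /=.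
    exists ((s%:C : R[i]) *: d), (s * r), (s * t); split; first exact: (Asc _ _ Adr).
    congr pair.
      by rewrite scalerDr scalerA -rmorphM.
    by rewrite mulrDr mulrA.
  + move=> x r s [d1 [r1 [t1 [A1 [-> ->]]]]] [d2 [r2 [t2 [A2 []]]]].
    case: (eqVneq t1 t2) => [e12|nt].
      subst t2 => /addIr e12; subst d2.
      by move=> ->; rewrite (Afun _ _ _ A1 A2).
    move=> h _; exfalso; apply: nx0.
    have tn : (t1 - t2) != 0 by rewrite subr_eq0.
    have := Asc ((t1 - t2)^-1) _ (Aadd _ _ A2 (Aopp _ _ A1)) => /=.
    have -> : d2 + - d1 = ((t1 - t2)%:C : R[i]) *: x0.
      have h' : d1 = d2 + (t2%:C : R[i]) *: x0 - (t1%:C : R[i]) *: x0 by rewrite -h addrK.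
      by rewrite rmorphB /= scalerBl h' opprB addrCA opprD addNKr.
    rewrite scalerA -rmorphM /= mulVf // scale1r => H; by eexists; exact: H.
  + move=> _ [d [r [t [Adr ->]]]] /=.
    case: (ltgtP t 0) => ht.
    *
      pose s := - t.
      have s0 : 0 < s by rewrite oppr_gt0.
      have sn : s != 0 by rewrite gt_eqF.
      have Ad' := Asc (s^-1) _ Adr; rewrite /= in Ad'.
      have := c_ge _ _ Ad'.
      have -> : d + (t%:C : R[i]) *: x0 = (s%:C : R[i]) *: ((s^-1)%:C *: d - x0).
        by rewrite scalerBr scale_inv // /s rmorphN scaleNr opprK.
      rewrite (pZ _ _ (ltW s0)) => H.
      have : s * (s^-1 * r - p ((s^-1)%:C *: d - x0)) <= s * c by rewrite ler_pM2l.
      rewrite mulrBr mulrA mulfV // mul1r /s mulNr => H2.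
      move: H2; rewrite !mulNr; set P := p _; move: (t * c) (t * P) => u v; lra.
    *
      have tn : t != 0 by rewrite gt_eqF.
      have Ad' := Asc (t^-1) _ Adr; rewrite /= in Ad'.
      have := c_le _ _ Ad'.
      have -> : d + (t%:C : R[i]) *: x0 = (t%:C : R[i]) *: ((t^-1)%:C *: d + x0).
        by rewrite scalerDr scale_inv.
      rewrite (pZ _ _ (ltW ht)) => H.
      have : t * c <= t * (p ((t^-1)%:C *: d + x0) - t^-1 * r) by rewrite ler_pM2l.
      by rewrite mulrBr mulrA mulfV // mul1r lerBrDl addrC.
    * by rewrite ht mul0r addr0 scale0r addr0; exact: (Ab _ Adr).
- move=> [d r] Adr; exists d, r, 0; split => //.
  by rewrite scale0r mul0r !addr0.
- move=> /(_ (x0, c)) h; apply: nx0; exists c; apply: h.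
  exists 0, 0, 1; split => //.
  by rewrite rmorph1 scale1r mul1r !add0r.
Qed.

Lemma HB_total (R : realType) (X : normedModType R[i]) (p : X -> R) (G0 : set (X * R)) :
  (forall x y, p (x + y) <= p x + p y) ->
  (forall (t : R) x, 0 <= t -> p ((t%:C : R[i]) *: x) = t * p x) ->
  vgraph p G0 -> G0 (0, 0) ->
  exists A, vgraph p A /\ G0 `<=` A /\ forall x, exists r, A (x, r).
Proof.
move=> pD pZ G0v G00.
pose P := fun A : set (X * R) => vgraph p (A `|` G0).
have chainP : forall F : set (set (X * R)), F `<=` P -> total_on F subset ->
    P (\bigcup_(Y in F) Y).
  move=> F FP Ftot.
  pose U := \bigcup_(Y in F) Y `|` G0.
  have two : forall a b, U a -> U b -> exists W, [/\ vgraph p W, W `<=` U, W a & W b].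
    have sub : forall Y, F Y -> Y `|` G0 `<=` U.
      by move=> Y FY z [Yz|Gz]; [left; exists Y|right].
    move=> a b [[Y FY Ya]|Ga] [[Z FZ Zb]|Gb].
    - have [YZ|ZY] := Ftot _ _ FY FZ.
        exists (Z `|` G0); split; [exact: FP| exact: sub| left; exact: YZ| by left].
      exists (Y `|` G0); split; [exact: FP| exact: sub| by left| left; exact: ZY].
    - exists (Y `|` G0); split; [exact: FP| exact: sub| by left| by right].
    - exists (Z `|` G0); split; [exact: FP| exact: sub| by right| by left].
    - exists G0; split => //; by move=> z Gz; right.
  split.
  - move=> a b Ua Ub; have [W [[Wadd _ _ _] WU Wa Wb]] := two _ _ Ua Ub.
    exact/WU/Wadd.
  - move=> t a Ua; have [W [[_ Wsc _ _] WU Wa _]] := two _ _ Ua Ua.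
    exact/WU/Wsc.
  - move=> x r s Ur Us; have [W [[_ _ Wf _] WU Wa Wb]] := two _ _ Ur Us.
    exact: Wf Wa Wb.
  - move=> a Ua; have [W [[_ _ _ Wb] WU Wa _]] := two _ _ Ua Ua.
    exact: Wb.
have [A [PA Amax]] := Zorn_bigcup chainP.
exists (A `|` G0); split => //; split; first by move=> z Gz; right.
move=> x0; apply: contrapT => nx0.
have [B [Bv [AB nBA]]] := vgraph_ext pD pZ PA (or_intror G00) nx0.
apply: (Amax B).
  split; first by move=> z Az; apply: AB; left.
  move=> BA; apply: nBA => z Bz; left; exact: BA.
rewrite /P setUidl //; move=> z Gz; apply: AB; by right.
Qed.

Lemma dist_pos (R : realType) (X : normedModType R[i]) (G : set X) (y : X) :
  closed G -> ~ G y -> exists d : R, 0 < d /\ forall g, G g -> d <= nr (y - g).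
Proof.
move=> cG Gy.
have : nbhs y (~` G) by apply: open_nbhs_nbhs; split => //; exact: closed_openC.
move=> /nbhs_ballP [e e0 He].
have eI := ger0_Im (ltW e0).
have eE : e = (complex.Re e)%:C by move: eI; case: (e) => a b /= ->.
have a0 : 0 < complex.Re e by rewrite -ltcR -eE.
move: He; rewrite eE => He.
exists (complex.Re e); split => // g Gg.
rewrite leNgt; apply/negP => H; apply: (He g) => //.
by rewrite -ball_normE /ball_ /= normE ltcR.
Qed.

Lemma sub_opp (R : realType) (X : normedModType R[i]) (G : set X) x :
  lin_subspace G -> G x -> G (- x).
Proof. by move=> [_ [_ Gs]] /(Gs (-1)); rewrite scaleN1r. Qed.

Lemma ReD (R : realType) (a b : R[i]) : complex.Re (a + b) = complex.Re a + complex.Re b.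
Proof. by case: a; case: b. Qed.

Lemma ReRM (R : realType) (t : R) (b : R[i]) : complex.Re (t%:C * b) = t * complex.Re b.
Proof. by case: b => u v; simpc. Qed.

Lemma Re_le_norm (R : realType) (a : R[i]) : complex.Re a <= complex.Re `|a|.
Proof.
have E : `|a| = (Num.sqrt (complex.Re a ^+ 2 + complex.Im a ^+ 2))%:C by exact: normc_def.
have H : `|complex.Re a|%:C <= `|a| by exact: normc_ge_Re.
move: H; rewrite E lecR /= => H; apply: le_trans H; exact: ler_norm.
Qed.

Lemma norm_realE (R : realType) (a : R[i]) : `|a| = (complex.Re `|a|)%:C.
Proof.
have E : `|a| = (Num.sqrt (complex.Re a ^+ 2 + complex.Im a ^+ 2))%:C by exact: normc_def.
by rewrite E.
Qed.

Lemma separate (R : realType) (X : normedModType R[i]) (G : set X) (y : X) :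
  closed_subspace G -> ~ G y ->
  exists f : X -> R[i],
    (forall (a : R[i]) x z, f (a *: x + z) = a * f x + f z) /\
    (exists C : R, 0 <= C /\ forall z, `|f z| <= C%:C * `|z|) /\
    (forall g, G g -> f g = 0) /\ f y = 1.
Proof.
move=> [LG cG] Gy; have [G0 [GD GZ]] := LG.
have [d [d0 Hd]] := dist_pos cG Gy.
pose p := fun z : X => d^-1 * nr z.
have pD : forall x z, p (x + z) <= p x + p z.
  by move=> x z; rewrite /p -mulrDr ler_pM2l ?invr_gt0 // nrD.
have pZ : forall (t : R) x, 0 <= t -> p ((t%:C : R[i]) *: x) = t * p x.
  by move=> t x t0; rewrite /p nrZ ReR ger0_norm // mulrCA.
pose H0 := [set a : X * R | exists g (l : R[i]), G g /\ a = (g + l *: y, complex.Re l)].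
have H0v : vgraph p H0.
  split.
  - move=> _ _ [g1 [l1 [G1 ->]]] [g2 [l2 [G2 ->]]] /=.
    exists (g1 + g2), (l1 + l2); split; first exact: (GD).
    by rewrite scalerDl addrACA ReD.
  - move=> t _ [g [l [Gg ->]]] /=.
    exists ((t%:C : R[i]) *: g), (t%:C * l); split; first exact: GZ.
    by rewrite scalerDr scalerA ReRM.
  - move=> x r s [g1 [l1 [G1 [-> ->]]]] [g2 [l2 [G2 []]]] h ->.
    case: (eqVneq l1 l2) => [-> //|nl]; exfalso; apply: Gy.
    have nl' : l1 - l2 != 0 by rewrite subr_eq0.
    have e : y = (l1 - l2)^-1 *: (g2 - g1).
      apply: (scalerI nl'); rewrite scalerA mulfV // scale1r scalerBl.
      have h' : g1 = g2 + l2 *: y - l1 *: y by rewrite -h addrK.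
      by rewrite h' opprB addrCA opprD addNKr.
    rewrite e; apply: (GZ); apply: (GD) => //; exact: sub_opp.
  - move=> _ [g [l [Gg ->]]] /=.
    case: (eqVneq l 0) => [->|ln].
      rewrite /p scale0r addr0 /=; apply: mulr_ge0; [by rewrite invr_ge0 ltW|exact: nr_ge0].
    have -> : g + l *: y = l *: (y - (- l^-1 *: g)).
      by rewrite scalerBr scalerA mulrN mulfV // scaleN1r opprK addrC.
    rewrite /p nrZ.
    have Gg' : G (- l^-1 *: g) by apply: (GZ).
    have := Hd _ Gg'.
    have := Re_le_norm l.
    have := nr_ge0 (y - - l^-1 *: g).
    rewrite ler_pdivlMl //.
    move=> h1 h2 h3.
    have h4 : 0 <= complex.Re `|l| by rewrite -ler0c -norm_realE.
    apply: le_trans (ler_wpM2l (ltW d0) h2) _.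
    rewrite mulrC; move: h4 h3; move: (complex.Re `|l|) (nr _) => L N; nra.
have H00 : H0 (0, 0) by exists 0, 0; split => //; rewrite scale0r addr0.
have [A [[Aadd Asc Afun Ab] [HA Atot]]] := HB_total pD pZ H0v H00.
pose v := fun x => projT1 (cid (Atot x)).
have vA : forall x, A (x, v x) by move=> x; exact: (projT2 (cid (Atot x))).
have vD : forall x z, v (x + z) = v x + v z.
  by move=> x z; apply: (Afun (x + z)); [exact: vA| exact: (Aadd _ _ (vA x) (vA z))].
have vZ : forall (t : R) x, v ((t%:C : R[i]) *: x) = t * v x.
  by move=> t x; apply: (Afun _ _ _ (vA _)); exact: (Asc _ _ (vA x)).
have vH : forall g l, G g -> v (g + l *: y) = complex.Re l.
  move=> g l Gg; apply: (Afun _ _ _ (vA _)); apply: HA; by exists g, l.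
have vb : forall x, v x <= p x by move=> x; exact: (Ab _ (vA x)).
pose f := fun x => (v x)%:C - 'i * (v ('i *: x))%:C.
have ii : 'i * 'i = -1 :> R[i] by rewrite -expr2 sqr_i.
have fD : forall x z, f (x + z) = f x + f z.
  move=> x z; rewrite /f scalerDr !vD !rmorphD /=; ring.
have fi : forall x, f ('i *: x) = 'i * f x.
  move=> x; rewrite /f scalerA ii -(rmorphN1 (real_complex R)) vZ mulN1r.
  rewrite mulrBr mulrA ii rmorphN /=; ring.
have fR : forall (t : R) x, f ((t%:C : R[i]) *: x) = t%:C * f x.
  move=> t x; have e : 'i *: ((t%:C : R[i]) *: x) = t%:C *: ('i *: x) by rewrite !scalerA mulrC.
  rewrite /f e !vZ !rmorphM /=; ring.
have aE : forall a : R[i], a = (complex.Re a)%:C + 'i * (complex.Im a)%:C.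
  by case=> u w; simpc.
have fZ : forall (a : R[i]) x, f (a *: x) = a * f x.
  move=> a x; rewrite {1}(aE a) scalerDl [('i * _)]mulrC -scalerA fD !fR fi.
  rewrite {3}(aE a); ring.
have f0 : f 0 = 0 by have := fZ 0 0; rewrite scale0r mul0r.
have fRe : forall x, complex.Re (f x) = v x by move=> x; rewrite /f; simpc.
exists f; split; last split; last split.
- by move=> a x z; rewrite fD fZ.
- exists d^-1; split; first by rewrite invr_ge0 ltW.
  move=> z; case: (eqVneq (f z) 0) => [->|fz0].
    by rewrite normr0 mulr_ge0 // ?ler0c ?invr_ge0 ?ltW.
  pose w := `|f z| / f z.
  have wf : f (w *: z) = `|f z| by rewrite fZ /w mulfVK.
  have nw : complex.Re `|w| = 1.
    rewrite /w normrM normfV normr_id mulfV ?normr_eq0 //.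
  have := vb (w *: z); rewrite /p nrZ nw mul1r -fRe wf => H.
  rewrite (norm_realE (f z)) normE -rmorphM lecR; exact: H.
- move=> g Gg; rewrite /f.
  have := vH g 0 Gg; rewrite scale0r addr0 => ->.
  have Gig : G ('i *: g) by apply: (GZ).
  have := vH _ 0 Gig; rewrite scale0r addr0 => ->.
  by rewrite /= mulr0 subrr.
- rewrite /f.
  have := vH 0 1 G0; rewrite scale1r add0r => ->.
  have := vH 0 'i G0; rewrite add0r => ->.
  by rewrite /= mulr0 subr0.
Qed.

Lemma bop_lin (R : realType) (X : normedModType R[i]) (T : X -> X) :
  bounded_op T ->
  [/\ T 0 = 0, (forall x y, T (x + y) = T x + T y) & (forall (a : R[i]) x, T (a *: x) = a *: T x)].
Proof.
move=> [L _].
have T0 : T 0 = 0 by have := L (-1) 0 0; rewrite scaler0 addr0 scaleN1r addNr.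
split => //.
- by move=> x y; have := L 1 x y; rewrite !scale1r.
- by move=> a x; have := L a x 0; rewrite !addr0 T0 addr0.
Qed.

Lemma bop_bound (R : realType) (X : normedModType R[i]) (T : X -> X) :
  bounded_op T -> exists M : R[i], 0 < M /\ forall x, `|T x| <= M * `|x|.
Proof.
move=> [L [M HM]]; exists (`|M| + 1); split.
  by apply: ltr_wpDl => //.
move=> x; have h := HM x.
have h0 : 0 <= M * `|x| by apply: le_trans h.
apply: (le_trans h); rewrite -(ger0_norm h0) normrM normr_id.
apply: ler_wpM2r => //; by rewrite lerDl.
Qed.

Lemma bop_cont (R : realType) (X : normedModType R[i]) (T : X -> X) :
  bounded_op T -> continuous T.
Proof.
move=> bT; have [T0 TD TZ] := bop_lin bT.
have [M [M0 HM]] := bop_bound bT.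
move=> x; apply/cvgrPdist_lt => e e0.
apply/nbhs_ballP; exists (e / M); first exact: divr_gt0.
move=> z; rewrite -ball_normE /ball_ /= => hz.
have TN : T (- z) = - T z by rewrite -scaleN1r TZ scaleN1r.
have -> : T x - T z = T (x - z) by rewrite TD TN.
apply: le_lt_trans (HM _) _.
by rewrite mulrC -ltr_pdivlMr.
Qed.

Lemma clspan_sub (R : realType) (X : normedModType R[i]) (A S : set X) :
  closed_subspace S -> A `<=` S -> clspan A `<=` S.
Proof. by move=> cS AS x; apply. Qed.

Lemma clspan_sup (R : realType) (X : normedModType R[i]) (A : set X) :
  A `<=` clspan A.
Proof. by move=> x Ax S _; apply. Qed.

Lemma clspan_cs (R : realType) (X : normedModType R[i]) (A : set X) :
  closed_subspace (clspan A).
Proof.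
split; first split; [|split|].
- by move=> S [[S0 _] _].
- by move=> x y Hx Hy S cS AS; have [[_ [SD _]] _] := cS; apply: SD; [exact: Hx|exact: Hy].
- by move=> a x Hx S cS AS; have [[_ [_ SZ]] _] := cS; apply: SZ; exact: Hx.
- have -> : clspan A = \bigcap_(S in [set S | closed_subspace S /\ A `<=` S]) S.
    by apply/seteqP; split => x H S; [move=> [] ; exact: H| move=> cS AS; exact: H].
  apply: closed_bigI => S [[_ cS] _]; exact: cS.
Qed.

Lemma clspan_mono (R : realType) (X : normedModType R[i]) (A B : set X) :
  A `<=` B -> clspan A `<=` clspan B.
Proof.
move=> AB; apply: clspan_sub; first exact: clspan_cs.
by move=> x /AB; exact: clspan_sup.
Qed.

Lemma preimage_cs (R : realType) (X : normedModType R[i]) (T : X -> X) (S : set X) :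
  bounded_op T -> closed_subspace S -> closed_subspace (T @^-1` S).
Proof.
move=> bT [[S0 [SD SZ]] cS]; have [T0 TD TZ] := bop_lin bT.
split; first split; [|split|].
- by rewrite /preimage /= T0.
- by move=> x y; rewrite /preimage /= TD; exact: SD.
- by move=> a x; rewrite /preimage /= TZ; exact: SZ.
- apply: preimage_closed => //; move=> x _; exact: bop_cont.
Qed.

Lemma img_clspan (R : realType) (X : normedModType R[i]) (T : X -> X) (A S : set X) :
  bounded_op T -> closed_subspace S -> (forall x, A x -> S (T x)) ->
  forall x, clspan A x -> S (T x).
Proof.
move=> bT cS AS x Hx; apply: (Hx (T @^-1` S)); first exact: preimage_cs.
exact: AS.
Qed.

Lemma rank_one_alg (R : realType) (X : normedModType R[i]) (N : set (set X))
  (G : set X) (x : X) (f : X -> R[i]) :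
  nest N -> N G -> (forall K, N K -> psub G K -> K x) ->
  (forall (a : R[i]) u w, f (a *: u + w) = a * f u + f w) ->
  (exists C : R, 0 <= C /\ forall z, `|f z| <= C%:C * `|z|) ->
  (forall g, G g -> f g = 0) ->
  nest_alg N (fun z => f z *: x).
Proof.
move=> [Ncs [Ntot _]] NG Hx fL [C [C0 fC]] fG.
split.
  split.
    by move=> a u w; rewrite fL scalerDl scalerA.
  exists (C%:C * `|x|) => z; rewrite normrZ mulrAC.
  by apply: ler_wpM2r => //.
move=> K NK _ [z Kz <-].
have [[K0 [_ KZ]] _] := Ncs K NK.
case: (pselect (K `<=` G)) => KG.
  by rewrite fG ?scale0r //; exact: KG.
have GK : G `<=` K by case: (Ntot _ _ NG NK).
apply: (KZ); apply: Hx => //; split => // eGK; apply: KG; by rewrite eGK.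
Qed.

Definition nplus (R : realType) (X : normedModType R[i]) (N : set (set X)) (G : set X) :=
  smeet [set K | N K /\ psub G K].

Lemma invariant_in_nest (R : realType) (X : normedModType R[i]) (N : set (set X))
  (L : set X) :
  nest N -> closed_subspace L ->
  (forall A, nest_alg N A -> forall y, L y -> L (A y)) -> N L.
Proof.
move=> nN cL Linv.
have nN' := nN; move: nN' => [Ncs [Ntot [N0 [NT [Nmeet Njoin]]]]].
have NGp : forall G, N (nplus N G) by move=> G; apply: Nmeet => K [].
have step1 : forall G, N G -> ~ (L `<=` G) -> nplus N G `<=` L.
  move=> G NG nLG x Gpx.
  have [y [Ly nGy]] : exists y, L y /\ ~ G y.
    apply: contrapT => H; apply: nLG => y Ly; apply: contrapT => nGy; apply: H; by exists y.
  have [f [fL [fC [fG fy]]]] := separate (Ncs G NG) nGy.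
  have A1 : nest_alg N (fun z => f z *: x).
    apply: rank_one_alg nN NG _ fL fC fG => K NK GK; apply: Gpx; by split.
  by have := Linv _ A1 y Ly; rewrite fy scale1r.
pose S := [set G | N G /\ ~ (L `<=` G)].
pose H := sjoin [set nplus N G | G in S].
have HL : H `<=` L.
  apply: clspan_sub => // z [_ [G [NG nLG] <-] Gz]; exact: step1 Gz.
have NH : N H by apply: Njoin => _ [G _ <-].
have GpH : forall G, S G -> nplus N G `<=` H.
  move=> G SG z Gz; apply: clspan_sup; exists (nplus N G) => //; by exists G.
pose F := smeet [set K | N K /\ L `<=` K].
have NF : N F by apply: Nmeet => K [].
have LF : L `<=` F by move=> z Lz K [_ LK]; exact: LK.
have FH : F `<=` H.
  case: (pselect (L `<=` H)) => LH.
    by move=> z Fz; apply: Fz.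
  have SH : S H by [].
  apply: subset_trans (GpH _ SH).
  move=> z Fz K [NK [HK nHK]]; apply: Fz; split => //.
  apply: contrapT => nLK.
  have KH : K `<=` H.
    apply: subset_trans (GpH K (conj NK nLK)).
    by move=> w Kw K' [_ [KK' _]]; exact: KK'.
  by apply: nHK; apply/seteqP; split.
have -> : L = F by apply/seteqP; split => // z Fz; apply: HL; exact: FH.
exact: NF.
Qed.

Lemma JE_cs (R : realType) (X : normedModType R[i]) (J : set (X -> X)) (E : set X) :
  closed_subspace (JE J E).
Proof. exact: clspan_cs. Qed.

Lemma JE_mono (R : realType) (X : normedModType R[i]) (J : set (X -> X)) (E F : set X) :
  E `<=` F -> JE J E `<=` JE J F.
Proof.
move=> EF; apply: clspan_mono => _ [T [x [JT [Ex ->]]]].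
by exists T, x; split => //; split => //; exact: EF.
Qed.

Lemma JE_gen (R : realType) (X : normedModType R[i]) (J : set (X -> X)) (E : set X) T x :
  J T -> E x -> JE J E (T x).
Proof. by move=> JT Ex; apply: clspan_sup; exists T, x. Qed.

Theorem mainTheorem3 (R : realType) (X : completeNormedModType R[i])
    (N : set (set X)) (J : set (X -> X)) :
  nest N -> bimodule N J ->
  (forall E, N E -> N (JE J E)) /\ admissible N (JE J).
Proof.
move=> nN [Jb [J0 [JD [JZ Jmul]]]].
have part1 : forall E, N E -> N (JE J E).
  move=> E NE; apply: invariant_in_nest nN (JE_cs J E) _.
  move=> A nA y Hy; have bA := nA.1.
  apply: (img_clspan bA (JE_cs J E)) Hy => _ [T [x [JT [Ex ->]]]].
  have [JAT _] := Jmul A T nA JT.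
  exact: (JE_gen JAT Ex).
split => //; split.
  split => // E F _ _; exact: JE_mono.
move=> M NM _.
have [Ncs _] := nN.
apply/seteqP; split.
- apply: clspan_sub; first exact: JE_cs.
  move=> z [_ [E [NE EM] <-] Ez].
  apply: JE_mono Ez => w Ew; apply: clspan_sup; exists E => //.
- apply: clspan_sub; first exact: clspan_cs.
  move=> _ [T [x [JT [Mx ->]]]].
  apply: (img_clspan (Jb T JT) (clspan_cs _)) Mx => w [E [NE EM] Ew].
  apply: clspan_sup; exists (JE J E); first by exists E.
  exact: JE_gen.
Qed.
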